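(* Let $d\ge 3$ be an odd integer, let $\omega=e^{2\pi i/d}$, $\tau=-e^{\pi i/d}$, and let $X,Z$ be the operators on $\mathbb{C}^d$ (basis $\{|r\rangle : r\in\mathbb{Z}/d\mathbb{Z}\}$) given by $Z|r\rangle=\omega^r|r\rangle$, $X|r\rangle=|r+1\rangle$, with displacement operators $D_{j,k}=\tau^{jk}X^jZ^k$. Let $x_0=-2-\sqrt{d+1}$ (with $\sqrt{d+1}>0$), let $\sqrt{x_0}$ be a purely imaginary square root of $x_0$, and let $|\Psi\rangle=N(\sqrt{x_0},v_1,\dots,v_{d-1})^{\mathrm T}$, where $|v_j|=1$ and $v_{-j}=-v_j^*$ for all $j\neq 0$ (indices mod $d$), and $N^2=1/(d-1-x_0)$. Denote by $\psi_r$ the components of $|\Psi\rangle$. Then for every $j\not\equiv 0 \pmod d$, $$\sqrt{d+1}\,\langle\Psi|X^{-2j}|\Psi\rangle=\frac{\psi_j^2}{|\psi_j|^2}\quad\Longleftrightarrow\quad \sum_{k=1}^{d-1}\langle\Psi|D_{-2j,k}|\Psi\rangle=-\sqrt{d+1}\,\langle\Psi|X^{-2j}|\Psi\rangle .$$ Consequently, the first identity holds for all $j\not\equiv0$ if and only if $\sum_{k=1}^{d-1}\langle\Psi|D_{j,k}|\Psi\rangle=-\sqrt{d+1}\,\langle\Psi|X^{j}|\Psi\rangle$ holds for all $j\not\equiv 0$.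
   Context: Indices of vector components and of $D_{j,k}$ are taken modulo $d$; $^*$ denotes complex conjugation. The identity $\sqrt{d+1}\langle\Psi|X^{-2j}|\Psi\rangle=\psi_j^2/|\psi_j|^2$ is called the $X$-overlap equation. *)

(* Defs.v *)
From HB Require Import structures.
From mathcomp Require Import all_boot all_order all_algebra.
Set Implicit Arguments. Unset Strict Implicit. Unset Printing Implicit Defensive.
Import Order.TTheory GRing.Theory Num.Theory.
Local Open Scope ring_scope.

Section Defs.
Variables (C : numClosedFieldType) (d : nat).

(* d.-root (-1) is the d-th root of -1 of minimal non-negative argument, i.e. e^{pi i/d} *)
Definition tau : C := - d.-root (-1).
Definition omega : C := (d.-root (-1 : C)) ^+ 2.

Definition Xpow (j : int) : 'M[C]_d :=
  \matrix_(r < d, s < d) ((r%:Z == s%:Z + j %[mod d%:Z])%Z)%:R.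
Definition Zpow (k : int) : 'M[C]_d :=
  \matrix_(r < d, s < d) ((r == s)%:R * omega ^ (k * s%:Z)).
Definition Dop (j k : int) : 'M[C]_d := tau ^ (j * k) *: (Xpow j *m Zpow k).

Definition expect (psi : nat -> C) (A : 'M[C]_d) : C :=
  \sum_(r < d) \sum_(s < d) (psi r)^* * A r s * psi s.

Definition Psi (N sx0 : C) (v : nat -> C) (r : nat) : C :=
  if (r %% d == 0)%N then N * sx0 else N * v (r %% d)%N.

Definition compZ (psi : nat -> C) (j : int) : C := psi `|(j %% d%:Z)%Z|%N.

End Defs.

(* Main.v *)
Require Import Defs.
From HB Require Import structures.
From mathcomp Require Import all_boot all_order all_algebra.
From mathcomp Require Import ring zify.
Set Implicit Arguments. Unset Strict Implicit. Unset Printing Implicit Defensive.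
Import Order.TTheory GRing.Theory Num.Theory.
Local Open Scope ring_scope.

Section Prim.
Variable C : numClosedFieldType.

Lemma unit_norm (x : C) (n : nat) : (0 < n)%N -> `|x ^+ n| = 1 -> `|x| = 1.
Proof. by move=> n0; rewrite normrX => /eqP; rewrite pexpr_eq1 // => /eqP. Qed.

Lemma conj_unit (x : C) : `|x| = 1 -> x * x^* = 1.
Proof. by move=> h; rewrite -normCK h expr1n. Qed.

Lemma pair_id (rho z : C) : rho * rho^* = 1 -> z * z^* = 1 ->
  (rho - z) * (rho - z^*) = 2%:R * rho * ('Re rho - 'Re z).
Proof.
move=> hr hz; rewrite !ReE.
apply/eqP; rewrite -subr_eq0; apply/eqP.
have -> : (rho - z) * (rho - z^*) - 2%:R * rho * ((rho + rho^*) / 2%:R - (z + z^*) / 2%:R)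
   = z * z^* - rho * rho^* by field; rewrite ?pnatr_eq0.
by rewrite hr hz subrr.
Qed.

Lemma noprim (d e : nat) : (0 < d)%N -> odd d -> (e %| d)%N -> (e < d)%N ->
  (d.-root (-1 : C)) ^+ e = -1 -> False.
Proof.
move=> d0 dodd ed elt rhoe.
set rho := d.-root (-1 : C) in rhoe.
have rhod : rho ^+ d = -1 by rewrite /rho rootCK.
have nrho : `|rho| = 1 by apply: (unit_norm d0); rewrite rhod normrN1.
have crho := conj_unit nrho.
have e0 : (0 < e)%N by exact: dvdn_gt0 d0 ed.
set q := (d %/ e)%N.
have dq : d = (q * e)%N by rewrite /q divnK.
have q1 : (1 < q)%N by rewrite -(ltn_pmul2r e0) mul1n -dq.
have qodd : odd q by move: dodd; rewrite dq oddM => /andP[].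
have [w /rootP]: exists w, root (\poly_(i < q) (1 : C)) w.
  by apply/closed_rootP; rewrite size_poly_eq ?oner_eq0 // -(subnKC q1).
rewrite horner_poly (eq_bigr _ (fun _ _ => mul1r _)) => pw0.
have wq : w ^+ q = 1 by apply/eqP; rewrite -subr_eq0 subrX1 pw0 mulr0.
have w1 : w != 1.
  apply/eqP => w1; move: pw0; rewrite w1 (eq_bigr _ (fun _ _ => expr1n _ _)).
  rewrite sumr_const card_ord => /eqP; rewrite pnatr_eq0; move: q1; case: (q) => //.
have nw : `|w| = 1 by apply: (unit_norm (ltnW q1)); rewrite wq normr1.
set u := - w.
have uq : u ^+ q = -1 by rewrite /u exprNn wq mulr1 -signr_odd qodd expr1.
have nu : `|u| = 1 by rewrite normrN.
have [r hr] := closed_field_poly_normal ('X^e - u%:P : {poly C}).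
rewrite (monicP (monicXnsubC _ e0)) scale1r in hr.
have szr : size r = e.
  by have := size_prod_XsubC r id; rewrite -hr size_XnsubC // => -[].
have rootr z : z \in r -> z ^+ e = u.
  move=> zr; have : root ('X^e - u%:P) z by rewrite hr root_prod_XsubC.
  by rewrite /root !hornerE subr_eq0 => /eqP.
have Pge0 : 0 <= \prod_(z <- r) ('Re rho - 'Re z).
  rewrite big_seq; apply: prodr_ge0 => z zr; rewrite subr_ge0.
  have zd : z ^+ d = -1 by rewrite dq mulnC exprM rootr.
  have [hIm|hIm] := boolP (0 <= 'Im z); first exact: rootC_Re_max d0 zd hIm.
  have hIm' : 'Im z < 0 by rewrite real_ltNge ?Creal_Im ?real0.
  rewrite -Re_conj; apply: (rootC_Re_max d0).
    by rewrite -rmorphXn zd rmorphN1.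
  by rewrite Im_conj oppr_ge0 ltW.
have nz z : z \in r -> z * z^* = 1.
  by move=> zr; apply: conj_unit; apply: (unit_norm e0); rewrite rootr.
have E1 : \prod_(z <- r) (rho - z) = rho ^+ e - u.
  have := congr1 (fun p => p.[rho]) hr; rewrite /= horner_prod !hornerE => ->.
  by apply: eq_bigr => z _; rewrite hornerXsubC.
have E2 : \prod_(z <- r) (rho^* - z) = rho^* ^+ e - u.
  have := congr1 (fun p => p.[rho^*]) hr; rewrite /= horner_prod !hornerE => ->.
  by apply: eq_bigr => z _; rewrite hornerXsubC.
have E3 : \prod_(z <- r) (rho - z^*) = rho ^+ e - u^*.
  have := congr1 (@Num.conj_op C) E2; rewrite rmorph_prod /= rmorphB rmorphXn /= conjCK => <-.
  by apply: eq_bigr => z _; rewrite rmorphB /= conjCK.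
have cst (c : C) : \prod_(z <- r) c = c ^+ size r.
  by elim: (r) => [|x s IH]; rewrite ?big_nil ?expr0 // big_cons IH exprS.
have key : \prod_(z <- r) ((rho - z) * (rho - z^*)) = - (2%:R ^+ e) * \prod_(z <- r) ('Re rho - 'Re z).
  rewrite (eq_big_seq (fun z => 2%:R * rho * ('Re rho - 'Re z))); last first.
    by move=> z zr; rewrite pair_id // nz.
  by rewrite big_split /= cst szr exprMn rhoe mulrN1.
move: key; rewrite big_split /= E1 E3 rhoe /u opprK rmorphN opprK.
have -> : (-1 + w) * (-1 + w^*) = `|w - 1| ^+ 2.
  by rewrite normCK rmorphB rmorph1 addrC [_ + w^*]addrC.
move=> h.
have : 0 < `|w - 1| ^+ 2 by rewrite exprn_gt0 // normr_gt0 subr_eq0.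
rewrite h mulNr oppr_gt0 => hlt.
have Hge : 0 <= 2%:R ^+ e * \prod_(z <- r) ('Re rho - 'Re z) :> C.
  by apply: mulr_ge0 => //; rewrite exprn_ge0 // ler0n.
by have := le_lt_trans Hge hlt; rewrite ltxx.
Qed.

Lemma rho_d (d : nat) : (0 < d)%N -> (d.-root (-1 : C)) ^+ d = -1.
Proof. by move=> d0; rewrite rootCK. Qed.

Lemma omega_d (d : nat) : (0 < d)%N -> omega C d ^+ d = 1.
Proof. by move=> d0; rewrite /omega -exprM mulnC exprM rho_d // sqrrN expr1n. Qed.

Lemma omega_prim (d : nat) : (0 < d)%N -> odd d -> d.-primitive_root (omega C d).
Proof.
move=> d0 dodd.
have [m pm md] := prim_order_exists d0 (omega_d d0).
have [emd|mnd] := eqVneq m d; first by move: pm; rewrite emd.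
have mlt : (m < d)%N by rewrite ltn_neqAle mnd dvdn_leq.
have := prim_expr_order pm; rewrite /omega -exprM mulnC exprM => /eqP.
rewrite sqrf_eq1 => /orP[/eqP h1|/eqP h1]; last by case: (noprim d0 dodd md mlt h1).
have : (d.-root (-1 : C)) ^+ d = 1.
  by rewrite -[in X in _ ^+ X](divnK md) mulnC exprM h1 expr1n.
rewrite rho_d // => /eqP.
by rewrite -subr_eq0 -opprD oppr_eq0 -(natrD C 1 1) pnatr_eq0.
Qed.
End Prim.
Section Main.
Variable C : numClosedFieldType.
Variable d : nat.
Hypothesis d3 : (3 <= d)%N.
Hypothesis dodd : odd d.

Let d0 : (0 < d)%N. Proof. by apply: leq_trans d3. Qed.
Let w := omega C d.
Let wprim : d.-primitive_root w := @omega_prim C d d0 dodd.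
Let wu : w \is a GRing.unit.
Proof.
rewrite unitfE; apply/eqP => w0; have := @omega_d C d d0; rewrite -/w w0 expr0n eqn0Ngt d0 /=.
by move/eqP; rewrite eq_sym oner_eq0.
Qed.

Definition hh := (d./2).+1.
Lemma hh2 : (hh * 2 = d.+1)%N.
Proof. have := odd_double_half d; rewrite dodd /hh -muln2 => <-; lia. Qed.

Lemma tau_w : tau C d = w ^+ hh.
Proof.
rewrite /tau /w /omega -exprM mulnC hh2 exprS (@rho_d C d d0) mulrN1 //.
Qed.

Lemma wz (z : int) : w ^ z = w ^+ `|(z %% d%:Z)%Z|%N.
Proof.
have dn0 : d%:Z != 0 by rewrite eqz_nat -lt0n d0.
have wd : w ^+ d = 1 := @omega_d C d d0.
rewrite {1}(divz_eq z d%:Z) exprzDr // [((_ %/ _)%Z * _)]mulrC -exprz_exp -(exprnP w d) wd exp1rz mul1r.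
by rewrite exprnP gez0_abs // modz_ge0.
Qed.

Let wd : w ^+ d = 1 := @omega_d C d d0.
Let dn0 : d%:Z != 0. Proof. by rewrite eqz_nat -lt0n d0. Qed.

Lemma hh2z : hh%:Z * 2 = d%:Z + 1.
Proof. by rewrite -PoszM hh2 -addn1 PoszD. Qed.

Lemma dvd2 (x : int) : (d%:Z %| 2 * x)%Z -> (d%:Z %| x)%Z.
Proof.
move=> h2; have h1 : (d%:Z %| hh%:Z * (2 * x))%Z by apply: dvdz_mull.
have -> : x = hh%:Z * (2 * x) - d%:Z * x.
  apply/eqP; rewrite -subr_eq0; apply/eqP.
  transitivity ((d%:Z + 1 - hh%:Z * 2) * x); first ring.
  by rewrite hh2z subrr mul0r.
by apply: rpredB => //; apply: dvdz_mulr; apply: dvdzz.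
Qed.

Lemma modabs (t : int) : (t %% d%:Z)%Z = `|(t %% d%:Z)%Z|%N%:Z.
Proof. by rewrite gez0_abs // modz_ge0. Qed.

Lemma modabs_lt (t : int) : (`|(t %% d%:Z)%Z| < d)%N.
Proof. by rewrite -ltz_nat -modabs; have := ltz_mod t dn0. Qed.

Lemma modeq_ord (s : nat) (j : int) : (s < d)%N ->
  ((s%:Z == j %[mod d%:Z])%Z) = (s == `|(j %% d%:Z)%Z|%N).
Proof. by move=> sd; rewrite (modz_small (m := s%:Z)) ?ltz_nat ?andbT // modabs eqz_nat. Qed.

Lemma w1_dvd (t : int) : (w ^+ `|(t %% d%:Z)%Z| == 1) = (d%:Z %| t)%Z.
Proof.
rewrite -(prim_order_dvd wprim).
apply/idP/idP.
  case E: `|(t %% d%:Z)%Z|%N => [|n] hd.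
    by apply/dvdz_mod0P; rewrite modabs E.
  by have := dvdn_leq (ltn0Sn n) hd; rewrite -E leqNgt modabs_lt.
by move/dvdz_mod0P => h; rewrite h dvdn0.
Qed.

Lemma dvd_t (m j : int) (s : nat) : (d%:Z %| m + 2 * j)%Z ->
  (d%:Z %| hh%:Z * m + s%:Z)%Z = ((s%:Z == j %[mod d%:Z])%Z).
Proof.
move=> hm; rewrite eqz_mod_dvd.
have e : 2 * (hh%:Z * m + s%:Z) = d%:Z * m + (m + 2 * j) + 2 * (s%:Z - j).
  apply/eqP; rewrite -subr_eq0; apply/eqP.
  transitivity ((hh%:Z * 2 - (d%:Z + 1)) * m); first ring.
  by rewrite hh2z subrr mul0r.
have dm : (d%:Z %| d%:Z * m + (m + 2 * j))%Z by apply: rpredD => //; apply: dvdz_mulr; apply: dvdzz.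
apply/idP/idP => h.
  apply: dvd2; have -> : 2 * (s%:Z - j) = 2 * (hh%:Z * m + s%:Z) - (d%:Z * m + (m + 2 * j)) by rewrite e; ring.
  by apply: rpredB => //; apply: dvdz_mull.
by apply: dvd2; rewrite e; apply: rpredD => //; apply: dvdz_mull.
Qed.

Lemma inner (m j : int) (s : nat) : (d%:Z %| m + 2 * j)%Z ->
  \sum_(1 <= k < d) tau C d ^ (m * k%:Z) * omega C d ^ (k%:Z * s%:Z)
  = ((s%:Z == j %[mod d%:Z])%Z)%:R * d%:R - 1.
Proof.
move=> hm; set t := hh%:Z * m + s%:Z.
set y := w ^+ `|(t %% d%:Z)%Z|.
have term k : tau C d ^ (m * k%:Z) * omega C d ^ (k%:Z * s%:Z) = y ^+ k.
  rewrite tau_w (exprnP w hh) exprz_exp -/w -exprzDr // /y -wz exprnP exprz_exp.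
  by congr (w ^ _); rewrite /t; ring.
rewrite (eq_bigr _ (fun k _ => term k)).
have yd : y ^+ d = 1 by rewrite /y -exprM mulnC exprM wd expr1n.
rewrite -(dvd_t s hm) -/t -w1_dvd -/y.
have [y1|yn1] := eqVneq y 1.
  rewrite (eq_bigr (fun _ => 1)) => [|k _]; last by rewrite y1 expr1n.
  by rewrite sumr_const_nat mul1r natrB.
have S0 : \sum_(k < d) y ^+ k = 0.
  apply/eqP; have := subrX1 y d; rewrite yd subrr => /esym/eqP.
  by rewrite mulf_eq0 subr_eq0 (negbTE yn1).
rewrite mul0r sub0r.
have := S0; rewrite -(big_mkord xpredT (fun k => y ^+ k)) big_ltn // expr0 => /eqP.
by rewrite addrC addr_eq0 => /eqP.
Qed.

Lemma Dentry (m k : int) (r s : 'I_d) :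
  Dop C d m k r s = tau C d ^ (m * k) * (Xpow C d m r s * omega C d ^ (k * s%:Z)).
Proof.
rewrite /Dop [in LHS]mxE [in LHS]mxE (bigD1 s) //= big1 => [|l ls].
  by rewrite addr0 [Zpow _ _ _ _ _]mxE eqxx mul1r.
by rewrite [Zpow _ _ _ _ _]mxE (negbTE ls) mul0r mulr0.
Qed.

Lemma collapse_mod (m j : int) : (d%:Z %| m + 2 * j)%Z ->
  `|((`|(j %% d%:Z)%Z|%N%:Z + m) %% d%:Z)%Z|%N = `|((- j) %% d%:Z)%Z|%N.
Proof.
move=> hm; congr absz; apply/eqP; rewrite eqz_mod_dvd -modabs.
have dj : (d%:Z %| j - (j %% d%:Z)%Z)%Z.
  by rewrite {1}(divz_eq j d%:Z) addrK; apply: dvdz_mull; apply: dvdzz.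
have -> : (j %% d%:Z)%Z + m - - j = (m + 2 * j) - (j - (j %% d%:Z)%Z) by ring.
exact: rpredB.
Qed.

Lemma sumD (psi : nat -> C) (m j : int) : (d%:Z %| m + 2 * j)%Z ->
  \sum_(1 <= k < d) expect psi (Dop C d m k%:Z)
  = d%:R * ((psi `|((- j) %% d%:Z)%Z|%N)^* * psi `|(j %% d%:Z)%Z|%N) - expect psi (Xpow C d m).
Proof.
move=> hm; rewrite /expect.
have F (a b c e f : C) : a * (b * (c * e)) * f = (a * c * f) * (b * e) by ring.
under eq_bigr => k _ do under eq_bigr => r _ do under eq_bigr => s _ do rewrite Dentry F.
rewrite exchange_big /=.
under eq_bigr => r _ do rewrite exchange_big /=.
under eq_bigr => r _ do under eq_bigr => s _ do rewrite -mulr_sumr (inner s hm).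
pose a : 'I_d := Ordinal (modabs_lt j).
pose b : 'I_d := Ordinal (modabs_lt (- j)).
have ha : nat_of_ord a = `|(j %% d%:Z)%Z|%N by [].
have hb : nat_of_ord b = `|((- j) %% d%:Z)%Z|%N by [].
clearbody a b.
have E1 (r : 'I_d) : \sum_(s < d) (psi r)^* * Xpow C d m r s * psi s * (((s%:Z == j %[mod d%:Z])%Z)%:R * d%:R - 1)
   = d%:R * ((psi r)^* * Xpow C d m r a * psi a) - \sum_(s < d) (psi r)^* * Xpow C d m r s * psi s.
  rewrite (bigD1 a) //= [in RHS](bigD1 a) //= modeq_ord // ha eqxx mulrBr mulr1 mul1r.
  rewrite (eq_bigr (fun s => - ((psi r)^* * Xpow C d m r s * psi s))); last first.
    move=> s sa; rewrite modeq_ord //.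
    have -> : (nat_of_ord s == `|(j %% d%:Z)%Z|%N) = false.
      by apply/negbTE; apply: contra sa => /eqP h; apply/eqP/val_inj; rewrite /= h ha.
    by rewrite mul0r sub0r mulrN1.
  by rewrite sumrN; ring.
under eq_bigr => r _ do rewrite E1.
rewrite sumrB -mulr_sumr; congr (_ * _ - _).
rewrite (bigD1 b) //= big1 => [|r rb]; last first.
  rewrite mxE ha modeq_ord // collapse_mod //.
  have -> : (nat_of_ord r == `|((- j) %% d%:Z)%Z|%N) = false.
    by apply/negbTE; apply: contra rb => /eqP h; apply/eqP/val_inj; rewrite /= h hb.
  by rewrite mulr0 mul0r.
by rewrite mxE ha modeq_ord // collapse_mod // -hb eqxx mulr1 addr0.
Qed.
End Main.

Lemma Xpow_per (C : numClosedFieldType) (d : nat) (m1 m2 : int) :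
  (d%:Z %| m1 - m2)%Z -> @Xpow C d m1 = @Xpow C d m2.
Proof.
move=> h; apply/matrixP => r s; rewrite !mxE; congr ((nat_of_bool _)%:R).
congr (_ == _); apply/eqP; rewrite eqz_mod_dvd.
by have -> : s%:Z + m1 - (s%:Z + m2) = m1 - m2 by ring.
Qed.

Lemma negmod (d : nat) (j : int) : (0 < d)%N -> ~~ (d%:Z %| j)%Z ->
  `|((- j) %% d%:Z)%Z|%N = (d - `|(j %% d%:Z)%Z|)%N.
Proof.
move=> d0 hj.
have dn0 : d%:Z != 0 by rewrite eqz_nat -lt0n d0.
have a0 : (0 < `|(j %% d%:Z)%Z| < d)%N by lia.
have ea : (j %% d%:Z)%Z = `|(j %% d%:Z)%Z|%N%:Z by rewrite gez0_abs // modz_ge0.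
have -> : ((- j) %% d%:Z)%Z = (d - `|(j %% d%:Z)%Z|)%N%:Z.
  rewrite -(@modz_small (d - `|(j %% d%:Z)%Z|)%N%:Z d%:Z); last by lia.
  apply/eqP; rewrite eqz_mod_dvd.
  have dj : (d%:Z %| j - (j %% d%:Z)%Z)%Z.
    by rewrite {1}(divz_eq j d%:Z) addrK; apply: dvdz_mull; apply: dvdzz.
  have -> : - j - (d - `|(j %% d%:Z)%Z|)%N%:Z = - (j - (j %% d%:Z)%Z) - d%:Z.
    rewrite [in RHS]ea; lia.
  by rewrite rpredB ?rpredN ?dvdzz.
by [].
Qed.

Lemma Gkey (C : numClosedFieldType) (d : nat)
  (hd3 : (3 <= d)%N) (hdodd : odd d)
  (sx0 N : C) (v : nat -> C)
  (hv : forall j : nat, (0 < j < d)%N -> `|v j| = 1)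
  (hvsym : forall j : nat, (0 < j < d)%N -> v (d - j)%N = - (v j)^*)
  (hN : N ^+ 2 = (d.-1%:R - (- 2 - sqrtC (d.+1%:R : C)))^-1) (j m : int) :
  ~~ (d%:Z %| j)%Z -> (d%:Z %| m + 2 * j)%Z ->
  let psi := Psi d N sx0 v in
  let s := sqrtC (d.+1%:R : C) in
  (s * expect psi (@Xpow C d m) = compZ d psi j ^+ 2 / `|compZ d psi j| ^+ 2
   <-> \sum_(1 <= k < d) expect psi (@Dop C d m k%:Z) = - s * expect psi (@Xpow C d m)).
Proof.
move=> hj hm psi s.
have d0 : (0 < d)%N by apply: leq_trans hd3.
rewrite (sumD hd3 hdodd psi hm) (negmod d0 hj) /compZ.
set a := `|(j %% d%:Z)%Z|%N.
have a0 : (0 < a < d)%N by rewrite /a; lia.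
have pa : psi a = N * v a.
  rewrite /psi /Psi modn_small; last by case/andP: a0.
  by have -> : (a == 0%N) = false by case/andP: a0 => ??; apply/eqP; lia.
have pb : psi (d - a)%N = N * - (v a)^*.
  rewrite /psi /Psi modn_small; last by case/andP: a0 => ??; lia.
  have -> : ((d - a)%N == 0%N) = false by case/andP: a0 => ??; apply/eqP; lia.
  by rewrite hvsym.
rewrite pa pb.
set E := expect psi (Xpow C d m).
set x := v a ^+ 2.
set K := N ^+ 2.
set D : C := d%:R.
have hs : s ^+ 2 = D + 1 by rewrite /s sqrtCK -addn1 natrD.
have s0 : 0 <= s.
  by rewrite /s sqrtC_ge0; apply: ler0n.
have den : d.-1%:R - (- 2 - s) = D + 1 + s.
  by rewrite -subn1 natrB ?d0 // /D; ring.
have Dpos : 0 < D + 1 + s.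
  apply: ltr_wpDr s0 _; apply: ltr_wpDl; [exact: ler0n | exact: ltr01].
have hK : K * (D + 1 + s) = 1.
  by rewrite /K hN den mulVf // gt_eqF.
have Kge0 : 0 <= K by rewrite /K hN den invr_ge0 ltW.
have NN : N^* * N = K.
  by rewrite -normCKC -normrX ger0_norm.
have ratio : (N * v a) ^+ 2 / `|N * v a| ^+ 2 = x.
  rewrite normrM !exprMn hv // expr1n mulr1 -normrX ger0_norm // -/K -/x.
  rewrite mulrAC divff ?mul1r //.
  by rewrite /K hN den invr_eq0 gt_eqF.
have cross : (N * - (v a)^*)^* * (N * v a) = - (K * x).
  rewrite rmorphM rmorphN /= conjCK -NN /x; ring.
rewrite ratio cross.
have s1 : s - 1 != 0.
  apply/eqP => h; have : s ^+ 2 = 1 by rewrite (subr0_eq h) expr1n.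
  rewrite hs => /eqP; rewrite -subr_eq0 addrK /D pnatr_eq0; lia.
split => h.
  apply/eqP; rewrite -subr_eq0; apply/eqP.
  transitivity (E * (K * (s ^+ 2 - D - 1) + (s - 1) * (1 - K * (D + 1 + s)))).
    by rewrite -h; ring.
  by rewrite hs hK; ring.
have h' : (s - 1) * E - D * K * x = 0.
  by apply/eqP; rewrite -subr_eq0; apply/eqP; move: h => /eqP; rewrite -subr_eq0 => /eqP h; rewrite -[RHS]h; ring.
have : (s - 1) * (s * E - x) = 0.
  transitivity (s * ((s - 1) * E - D * K * x) + x * (K * (D + 1 - s ^+ 2) - (s - 1) * (1 - K * (D + 1 + s)))).
    by ring.
  by rewrite h' hs hK; ring.
by move/eqP; rewrite mulf_eq0 (negbTE s1) /= subr_eq0 => /eqP.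
Qed.

Unset Implicit Arguments.
Theorem proposition1 (C : numClosedFieldType) (d : nat)
  (hd3 : (3 <= d)%N) (hdodd : odd d)
  (sx0 N : C) (v : nat -> C)
  (hsx0 : sx0 ^+ 2 = - 2 - sqrtC (d.+1%:R : C))
  (hsx0im : 'Re sx0 = 0)
  (hv : forall j : nat, (0 < j < d)%N -> `|v j| = 1)
  (hvsym : forall j : nat, (0 < j < d)%N -> v (d - j)%N = - (v j)^*)
  (hN : N ^+ 2 = (d.-1%:R - (- 2 - sqrtC (d.+1%:R : C)))^-1) :
  let psi := Psi d N sx0 v in
  let s := sqrtC (d.+1%:R : C) in
  (forall j : int, ~~ (d%:Z %| j)%Z ->
     (s * expect psi (@Xpow C d (- (2 * j))) = compZ d psi j ^+ 2 / `|compZ d psi j| ^+ 2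
      <-> \sum_(1 <= k < d) expect psi (@Dop C d (- (2 * j)) k%:Z)
          = - s * expect psi (@Xpow C d (- (2 * j)))))
  /\
  ((forall j : int, ~~ (d%:Z %| j)%Z ->
     s * expect psi (@Xpow C d (- (2 * j))) = compZ d psi j ^+ 2 / `|compZ d psi j| ^+ 2)
   <->
   (forall j : int, ~~ (d%:Z %| j)%Z ->
     \sum_(1 <= k < d) expect psi (@Dop C d j k%:Z) = - s * expect psi (@Xpow C d j))).
Proof.
move=> psi s.
have G := @Gkey C d hd3 hdodd sx0 N v hv hvsym hN.
have nd2 (j : int) : ~~ (d%:Z %| j)%Z -> ~~ (d%:Z %| - (2 * j))%Z.
  by move=> hj; apply: contra hj; rewrite rpredN; apply: (dvd2 C hd3 hdodd).
split.
  move=> j hj; apply: G => //; by rewrite addrC subrr dvdz0.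
split => H m hm.
  pose j := - ((hh d)%:Z * m).
  have e2 : m + 2 * j = - (d%:Z * m).
    apply/eqP; rewrite -subr_eq0; apply/eqP.
    transitivity (((d%:Z + 1) - (hh d)%:Z * 2) * m); first by rewrite /j; ring.
    by rewrite (hh2z C hd3 hdodd) subrr mul0r.
  have hjm : (d%:Z %| m + 2 * j)%Z by rewrite e2 rpredN dvdz_mulr ?dvdzz.
  have hj : ~~ (d%:Z %| j)%Z.
    apply: contra hm => hdj.
    have -> : m = (m + 2 * j) - 2 * j by ring.
    by rewrite rpredB // dvdz_mull.
  apply: (G j m hj hjm).1.
  have := H j hj; rewrite (@Xpow_per C d (- (2 * j)) m) //.
  have -> : - (2 * j) - m = - (m + 2 * j) by ring.
  by rewrite rpredN.
apply: (G m (- (2 * m)) hm _).2; first by rewrite addrC subrr dvdz0.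
exact: H (- (2 * m)) (nd2 m hm).
Qed.
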